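(* Let $n\ge2$ and suppose $(y,z)$ is a $C^1$ solution with $y,z>0$ on $[0,\infty)$ of \[\dot y=z^2(n+1-y)-ny,\qquad \dot z=\tfrac{n+1}{n}z(n-1+y)-(n+z^2)z,\] such that $(y,z)\to(0,0)$ as $t\to\infty$. Then $\dfrac{z^2}{y}\to\dfrac{n^2-2}{n(n+1)}$ as $t\to\infty$. *)

(* Defs.v *)
From Stdlib Require Export Reals.
From Coquelicot Require Export Coquelicot.

(* Main.v *)
Require Import Defs.
From Stdlib Require Import Lra Classical.
Open Scope R_scope.

Lemma der_cont f x l : is_derive f x l -> continuity_pt f x.
Proof.
  intro H. apply is_derive_Reals in H.
  exact (derivable_continuous_pt f x (exist _ l H)).
Qed.

Lemma barrier_up (f df : R -> R) A s c0 :
  A < s -> (forall x, A <= x <= s -> is_derive f x (df x)) ->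
  f A <= c0 -> (forall x, A < x <= s -> c0 < f x -> df x < 0) -> f s <= c0.
Proof.
  intros Hs Hd HA Hneg.
  destruct (Rle_dec (f s) c0) as [h0|h0]; [exact h0|exfalso].
  destruct (continuity_ab_maj f A s) as [Mx [HM HMx]]; [lra| |].
  { intros c Hc. exact (der_cont _ _ _ (Hd c Hc)). }
  assert (Hfs := HM s ltac:(lra)).
  assert (HAM : A < Mx).
  { destruct (Rle_lt_or_eq_dec A Mx (proj1 HMx)) as [h1|h1]; [exact h1|].
    subst Mx. lra. }
  assert (Hdn := Hneg Mx ltac:(lra) ltac:(lra)).
  assert (Hder := Hd Mx ltac:(lra)). apply is_derive_Reals in Hder.
  destruct (Hder (- df Mx / 2) ltac:(lra)) as [del Hdel].
  set (h := - Rmin (del / 2) (Mx - A)).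
  assert (Hh1 : 0 < Rmin (del/2) (Mx - A)).
  { apply Rmin_glb_lt; [destruct del; simpl; lra | lra]. }
  assert (Hh2 : Rmin (del/2) (Mx - A) <= del/2) by apply Rmin_l.
  assert (Hh3 : Rmin (del/2) (Mx - A) <= Mx - A) by apply Rmin_r.
  assert (Hq := Hdel h ltac:(unfold h; lra) ltac:(unfold h; rewrite Rabs_Ropp, Rabs_pos_eq; destruct del; simpl in *; lra)).
  assert (Hle := HM (Mx + h) ltac:(unfold h; lra)).
  apply Rabs_def2 in Hq. destruct Hq as [Hq1 Hq2].
  assert (Hhn : h < 0) by (unfold h; lra).
  assert (Hq3 : (f (Mx + h) - f Mx) / h < 0) by lra.
  assert (Hq4 : 0 <= (f (Mx + h) - f Mx) / h).
  { unfold Rdiv. replace ((f (Mx + h) - f Mx) * / h) with ((f Mx - f (Mx + h)) * / (- h)) by (field; lra).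
    apply Rmult_le_pos; [lra|]. left. apply Rinv_0_lt_compat. lra. }
  lra.
Qed.

Lemma logistic (w e : R -> R) (a b T0 : R) (ha : 0 < a) (hb : 0 < b)
 (Hpos : forall t, T0 <= t -> 0 < w t)
 (Hd : forall t, T0 < t -> is_derive w t (w t * (a - b * w t + e t)))
 (He : forall eps, 0 < eps -> exists T, forall t, T < t -> Rabs (e t) < eps) :
 forall eps, 0 < eps -> exists M, forall t, M < t -> Rabs (w t - a/b) < eps.
Proof.
  intros eps heps.
  set (L := a / b).
  assert (hL : 0 < L) by (unfold L; apply Rdiv_lt_0_compat; lra).
  assert (haL : a = b * L) by (unfold L; field; lra).
  set (d := Rmin (eps/2) (L/2)).
  assert (hd1 : 0 < d) by (unfold d; apply Rmin_glb_lt; lra).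
  assert (hd2 : d <= eps/2) by apply Rmin_l.
  assert (hd3 : d <= L/2) by apply Rmin_r.
  destruct (He (b * d / 2)) as [T' HT'].
  { apply Rmult_lt_0_compat; [apply Rmult_lt_0_compat|]; lra. }
  set (T := Rmax T' T0 + 1).
  assert (hT1 : T' < T) by (unfold T; generalize (Rmax_l T' T0); lra).
  assert (hT2 : T0 < T) by (unfold T; generalize (Rmax_r T' T0); lra).
  set (dw := fun t => w t * (a - b * w t + e t)).
  assert (HdT : forall t, T <= t -> is_derive w t (dw t)).
  { intros t ht. apply Hd. lra. }
  assert (HpT : forall t, T <= t -> 0 < w t).
  { intros t ht. apply Hpos. lra. }
  assert (HeT : forall t, T <= t -> Rabs (e t) < b * d / 2).
  { intros t ht. apply HT'. lra. }
  assert (Hup : forall x, T <= x -> L + d < w x -> dw x < -((L + d) * (b * d / 2))).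
  { intros x hx hw. unfold dw. assert (h1 := HeT x hx). apply Rabs_def2 in h1.
    assert (h2 : b * (w x - (L + d)) > 0) by (apply Rmult_lt_0_compat; lra).
    assert (hX : a - b * w x + e x < - (b * d / 2)) by nra.
    assert (h3 : 0 < b * d / 2) by nra.
    nra. }
  assert (Hlo : forall x, T <= x -> w x < L - d -> w x * (b * d / 2) < dw x).
  { intros x hx hw. unfold dw. assert (h1 := HeT x hx). apply Rabs_def2 in h1.
    assert (h2 : b * ((L - d) - w x) > 0) by (apply Rmult_lt_0_compat; lra).
    assert (hX : a - b * w x + e x > (b * d / 2)) by nra.
    assert (h4 := HpT x hx).
    nra. }
  assert (MVT1 : forall s, T < s -> exists c, T <= c <= s /\ w s - w T = dw c * (s - T)).
  { intros s hs. destruct (MVT_gen w T s dw) as [c [hc hc2]].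
    - intros x hx. rewrite Rmin_left in hx by lra. rewrite Rmax_right in hx by lra.
      apply HdT. lra.
    - intros x hx. rewrite Rmin_left in hx by lra. rewrite Rmax_right in hx by lra.
      apply (der_cont _ _ _ (HdT x ltac:(lra))).
    - rewrite Rmin_left in hc by lra. rewrite Rmax_right in hc by lra.
      exists c. split; [exact hc | exact hc2]. }
  assert (R1 : exists T1, T <= T1 /\ w T1 <= L + d).
  { apply NNPP. intro Hn.
    assert (H : forall t, T <= t -> L + d < w t).
    { intros t ht. destruct (Rle_dec (w t) (L + d)) as [h|h].
      - exfalso. apply Hn. exists t. split; assumption.
      - lra. }
    set (k := (L + d) * (b * d / 2)).
    assert (hk : 0 < k) by (unfold k; apply Rmult_lt_0_compat; nra).
    assert (hwT := HpT T ltac:(lra)).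
    set (s := T + w T / k + 1).
    assert (hs0 : 0 <= w T / k) by (apply Rlt_le, Rdiv_lt_0_compat; lra).
    destruct (MVT1 s ltac:(unfold s; lra)) as [c [hc hc2]].
    assert (hdc := Hup c ltac:(lra) (H c ltac:(lra))).
    assert (hws := HpT s ltac:(unfold s; lra)).
    assert (hsT : s - T = w T / k + 1) by (unfold s; ring).
    rewrite hsT in hc2.
    assert (k * (w T / k + 1) = w T + k) by (field; lra).
    assert (dw c * (w T / k + 1) <= - k * (w T / k + 1)) by
      (apply Rmult_le_compat_r; [lra | fold k in hdc; lra]).
    lra. }
  assert (R2 : exists T2, T <= T2 /\ L - d <= w T2).
  { apply NNPP. intro Hn.
    assert (H : forall t, T <= t -> w t < L - d).
    { intros t ht. destruct (Rle_dec (L - d) (w t)) as [h|h].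
      - exfalso. apply Hn. exists t. split; assumption.
      - lra. }
    assert (hwT := HpT T ltac:(lra)).
    assert (Mono : forall t, T <= t -> w T <= w t).
    { intros t ht. destruct (Rle_lt_or_eq_dec T t ht) as [h|h]; [|rewrite <- h; lra].
      destruct (MVT1 t h) as [c [hc hc2]].
      assert (hdc := Hlo c ltac:(lra) (H c ltac:(lra))).
      assert (0 < w c * (b * d / 2)) by (apply Rmult_lt_0_compat; [apply HpT; lra| nra]).
      assert (0 <= dw c * (t - T)) by (apply Rmult_le_pos; lra).
      lra. }
    set (k := w T * (b * d / 2)).
    assert (hk : 0 < k) by (unfold k; apply Rmult_lt_0_compat; nra).
    set (s := T + L / k + 1).
    assert (hs0 : 0 <= L / k) by (apply Rlt_le, Rdiv_lt_0_compat; lra).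
    destruct (MVT1 s ltac:(unfold s; lra)) as [c [hc hc2]].
    assert (hdc := Hlo c ltac:(lra) (H c ltac:(lra))).
    assert (hm := Mono c ltac:(lra)).
    assert (hk2 : k <= w c * (b * d / 2)) by (unfold k; apply Rmult_le_compat_r; nra).
    assert (hws := H s ltac:(unfold s; lra)).
    assert (hsT : s - T = L / k + 1) by (unfold s; ring).
    rewrite hsT in hc2.
    assert (k * (L / k + 1) = L + k) by (field; lra).
    assert (k * (L / k + 1) <= dw c * (L / k + 1)) by
      (apply Rmult_le_compat_r; lra).
    lra. }
  destruct R1 as [T1 [hT1a hT1b]]. destruct R2 as [T2 [hT2a hT2b]].
  exists (Rmax T1 T2). intros t ht.
  assert (ht1 : T1 < t) by (generalize (Rmax_l T1 T2); lra).
  assert (ht2 : T2 < t) by (generalize (Rmax_r T1 T2); lra).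
  assert (U : w t <= L + d).
  { apply (barrier_up w dw T1 t (L + d) ht1).
    - intros x hx. apply HdT. lra.
    - exact hT1b.
    - intros x hx hw. assert (hh := Hup x ltac:(lra) hw).
      assert (0 < (L + d) * (b * d / 2)) by (apply Rmult_lt_0_compat; nra). lra. }
  assert (V : - w t <= - (L - d)).
  { apply (barrier_up (fun t => - w t) (fun t => - dw t) T2 t (- (L - d)) ht2).
    - intros x hx. exact (is_derive_opp w x (dw x) (HdT x ltac:(lra))).
    - lra.
    - intros x hx hw. assert (hh := Hlo x ltac:(lra) ltac:(lra)).
      assert (0 < w x * (b * d / 2)) by (apply Rmult_lt_0_compat; [apply HpT; lra| nra]). lra. }
  apply Rabs_def1; lra.
Qed.

Theorem lemma3p8 (n : nat) (hn : (2 <= n)%nat) (y z : R -> R)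
  (Hy : forall t, 0 < t ->
     is_derive y t (z t ^ 2 * (INR n + 1 - y t) - INR n * y t))
  (Hz : forall t, 0 < t ->
     is_derive z t ((INR n + 1) / INR n * z t * (INR n - 1 + y t)
                    - (INR n + z t ^ 2) * z t))
  (Hypos : forall t, 0 <= t -> 0 < y t)
  (Hzpos : forall t, 0 <= t -> 0 < z t)
  (Hylim : is_lim y p_infty 0)
  (Hzlim : is_lim z p_infty 0) :
  is_lim (fun t => z t ^ 2 / y t) p_infty
         ((INR n ^ 2 - 2) / (INR n * (INR n + 1))).
Proof.
  set (N := INR n).
  assert (hN : 2 <= N) by (unfold N; apply (le_INR 2 n) in hn; simpl in hn; lra).
  set (e := fun t => 2 * (N + 1) / N * y t - z t ^ 2).
  set (a := N - 2 / N). set (b := N + 1).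
  assert (Hw := logistic (fun t => z t ^ 2 / y t) e a b 0).
  replace ((N ^ 2 - 2) / (N * b)) with (a / b) by (unfold a, b; field; lra).
  apply is_lim_spec. intros [eps heps]. unfold is_lim', Rbar_locally'.
  apply Hw; [| | | | | exact heps].
  - unfold a. assert (2 / N <= 1) by (apply Rmult_le_reg_r with N; [lra|]; field_simplify; lra). lra.
  - unfold b; lra.
  - intros t ht. apply Rdiv_lt_0_compat; [apply pow_lt, Hzpos | apply Hypos]; lra.
  - intros t ht.
    assert (Hd := is_derive_div _ _ t _ _ (is_derive_pow z 2 t _ (Hz t ht)) (Hy t ht)
                    ltac:(assert (0 < y t) by (apply Hypos; lra); lra)).
    assert (0 < y t) by (apply Hypos; lra).
    eapply is_derive_ext; [| refine (eq_ind _ _ Hd _ _)]; [reflexivity|].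
    unfold e, a, b. fold N. simpl. field. lra.
  - intros ep hep.
    apply is_lim_spec in Hylim. apply is_lim_spec in Hzlim.
    set (c := 2 * (N + 1) / N).
    assert (hc : 0 < c) by (unfold c; apply Rdiv_lt_0_compat; lra).
    destruct (Hylim (mkposreal (ep / 2 / c) ltac:(apply Rdiv_lt_0_compat; lra))) as [M1 HM1].
    destruct (Hzlim (mkposreal (Rmin 1 (ep / 2)) ltac:(apply Rmin_glb_lt; lra))) as [M2 HM2].
    exists (Rmax M1 M2). intros t ht.
    assert (h1 := HM1 t ltac:(generalize (Rmax_l M1 M2); lra)).
    assert (h2 := HM2 t ltac:(generalize (Rmax_r M1 M2); lra)).
    simpl in h1, h2. rewrite Rminus_0_r in h1, h2.
    assert (hm1 := Rmin_l 1 (ep/2)). assert (hm2 := Rmin_r 1 (ep/2)).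
    apply Rabs_def2 in h1. apply Rabs_def2 in h2.
    assert (hy : Rabs (c * y t) < ep / 2).
    { destruct h1 as [h1a h1b].
      assert (hce : c * (ep / 2 / c) = ep / 2) by (field; lra).
      apply Rabs_def1; nra. }
    assert (hz : 0 <= z t ^ 2 < ep / 2) by (split; [apply pow2_ge_0| nra]).
    unfold e. fold c. apply Rabs_def2 in hy. apply Rabs_def1; lra.
Qed.
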